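(* Let $\Sigma$ be a finite alphabet. A set $S$ of unranked trees over $\Sigma$ is definable by a $<$-invariant MSO sentence over the class of all unranked trees over $\Sigma$ if and only if it is definable by a sibling-order-invariant MSO sentence over the class of all unranked trees over $\Sigma$.
   Context: An unranked tree domain $D$ is a finite prefix-closed set of words over the positive integers such that $s\cdot i\in D$ implies $s\cdot j\in D$ for all $1\le j<i$. An unranked tree over $\Sigma$ is a structure $T=(D,\prec,(P_a)_{a\in\Sigma})$ where $D$ is an unranked tree domain, $\prec$ is the descendant relation ($s\prec s\cdot s'$ for $s\cdot s'\in D$ with $s'$ nonempty), and the sets $P_a$ partition $D$ (node labels). A sibling order on $T$ is a binary relation $\triangleleft$ such that $s'\triangleleft s''$ implies $s'=s\cdot i$, $s''=s\cdot j$ for some node $s$ and distinct $i,j$, and such that $\triangleleft$ restricted to the children of each node is a linear order. An MSO sentence $\varphi$ over the tree vocabulary plus a binary symbol $<$ is $<$-invariant over trees if for every unranked tree $T$ and any two linear orders $<_1,<_2$ of $\mathrm{dom}(T)$, $(T,<_1)\models\varphi$ iff $(T,<_2)\models\varphi$; it then defines the set of trees $T$ with $(T,<)\models\varphi$ for some (equivalently every) linear order $<$. Sibling-order-invariant MSO sentences (over the tree vocabulary plus a binary symbol $\triangleleft$) and the sets they define are defined in the same way, with linear orders replaced by sibling orders. *)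

(* Defs.v *)
From mathcomp Require Import all_boot.
Set Implicit Arguments. Unset Strict Implicit. Unset Printing Implicit Defensive.

(* Nodes are words over the positive integers, s . i = rcons s i. *)
Definition node := seq nat.

Definition is_tree_domain (D : seq node) : Prop :=
  (forall u, u \in D -> all (fun i => 0 < i) u) /\
  (forall u v, (u ++ v) \in D -> u \in D) /\
  (forall s i j, rcons s i \in D -> 0 < j -> j < i -> rcons s j \in D).

(* An unranked tree over Sigma: domain plus labelling (the partition (P_a)). *)
Record utree (Sigma : finType) := UTree {
  tdom : seq node;
  tlab : node -> Sigma;
  tdom_ok : is_tree_domain tdom }.

Definition desc (s t : node) : Prop := exists s', s' <> [::] /\ t = s ++ s'.

Inductive mso (Sigma : finType) :=
| FLab : Sigma -> nat -> mso Sigma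
| FDesc : nat -> nat -> mso Sigma
| FRel : nat -> nat -> mso Sigma            (* the extra binary symbol *)
| FEq : nat -> nat -> mso Sigma
| FIn : nat -> nat -> mso Sigma
| FNot : mso Sigma -> mso Sigma
| FOr : mso Sigma -> mso Sigma -> mso Sigma
| FEx1 : nat -> mso Sigma -> mso Sigma
| FEx2 : nat -> mso Sigma -> mso Sigma.

Fixpoint closed_in (Sigma : finType) (b1 b2 : seq nat) (f : mso Sigma) : bool :=
  match f with
  | FLab _ x => x \in b1
  | FDesc x y | FRel x y | FEq x y => (x \in b1) && (y \in b1)
  | FIn x X => (x \in b1) && (X \in b2)
  | FNot g => closed_in b1 b2 g
  | FOr g h => closed_in b1 b2 g && closed_in b1 b2 h
  | FEx1 v g => closed_in (v :: b1) b2 g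
  | FEx2 V g => closed_in b1 (V :: b2) g
  end.

Definition sentence (Sigma : finType) (f : mso Sigma) : bool := closed_in [::] [::] f.

Definition upd {A : Type} (e : nat -> A) (v : nat) (a : A) : nat -> A :=
  fun w => if w == v then a else e w.

Fixpoint sat (Sigma : finType) (T : utree Sigma) (R : node -> node -> Prop)
    (e1 : nat -> node) (e2 : nat -> node -> Prop) (f : mso Sigma) : Prop :=
  match f with
  | FLab a x => tlab T (e1 x) = a
  | FDesc x y => desc (e1 x) (e1 y)
  | FRel x y => R (e1 x) (e1 y)
  | FEq x y => e1 x = e1 y
  | FIn x X => e2 X (e1 x)
  | FNot g => ~ sat T R e1 e2 g
  | FOr g h => sat T R e1 e2 g \/ sat T R e1 e2 h
  | FEx1 v g => exists u, u \in tdom T /\ sat T R (upd e1 v u) e2 g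
  | FEx2 V g => exists U : node -> Prop,
      (forall u, U u -> u \in tdom T) /\ sat T R e1 (upd e2 V U) g
  end.

Definition models (Sigma : finType) (T : utree Sigma) (R : node -> node -> Prop)
    (f : mso Sigma) : Prop :=
  sat T R (fun _ => [::]) (fun _ _ => False) f.

Definition linear_order_on (Sigma : finType) (T : utree Sigma) (R : node -> node -> Prop) : Prop :=
  (forall x y, R x y -> x \in tdom T /\ y \in tdom T) /\
  (forall x, ~ R x x) /\
  (forall x y z, R x y -> R y z -> R x z) /\
  (forall x y, x \in tdom T -> y \in tdom T -> x <> y -> R x y \/ R y x).

Definition sibling_order_on (Sigma : finType) (T : utree Sigma) (R : node -> node -> Prop) : Prop :=
  (forall x y, R x y -> x \in tdom T /\ y \in tdom T) /\
  (forall x y, R x y -> exists s i j, i <> j /\ x = rcons s i /\ y = rcons s j) /\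
  (forall s,
     let C := fun x => exists i, x = rcons s i /\ x \in tdom T in
     (forall x, C x -> ~ R x x) /\
     (forall x y z, C x -> C y -> C z -> R x y -> R y z -> R x z) /\
     (forall x y, C x -> C y -> x <> y -> R x y \/ R y x)).

Definition order_invariant (Sigma : finType) (f : mso Sigma) : Prop :=
  forall (T : utree Sigma) R1 R2, linear_order_on T R1 -> linear_order_on T R2 ->
    (models T R1 f <-> models T R2 f).

Definition sibling_invariant (Sigma : finType) (f : mso Sigma) : Prop :=
  forall (T : utree Sigma) R1 R2, sibling_order_on T R1 -> sibling_order_on T R2 ->
    (models T R1 f <-> models T R2 f).

Definition order_inv_definable (Sigma : finType) (S : utree Sigma -> Prop) : Prop :=
  exists f : mso Sigma, sentence f /\ order_invariant f /\
    forall T, S T <-> exists R, linear_order_on T R /\ models T R f.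

Definition sibling_inv_definable (Sigma : finType) (S : utree Sigma -> Prop) : Prop :=
  exists f : mso Sigma, sentence f /\ sibling_invariant f /\
    forall T, S T <-> exists R, sibling_order_on T R /\ models T R f.

(* Main.v *)
Require Import Defs.
From mathcomp Require Import all_boot zify.
From Stdlib Require Import Classical.
Set Implicit Arguments. Unset Strict Implicit.

Fixpoint subst (Sigma : finType) (phi : nat -> nat -> mso Sigma) (f : mso Sigma) : mso Sigma :=
  match f with
  | FRel x y => phi x y
  | FNot g => FNot (subst phi g)
  | FOr g h => FOr (subst phi g) (subst phi h)
  | FEx1 v g => FEx1 v (subst phi g)
  | FEx2 V g => FEx2 V (subst phi g)
  | g => g
  end.

Fixpoint vbound (Sigma : finType) (f : mso Sigma) : nat :=
  match f with
  | FLab _ x => x.+1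
  | FDesc x y | FRel x y | FEq x y => maxn x.+1 y.+1
  | FIn x _ => x.+1
  | FNot g => vbound g
  | FOr g h => maxn (vbound g) (vbound h)
  | FEx1 v g => maxn v.+1 (vbound g)
  | FEx2 _ g => vbound g
  end.

Lemma subst_closed Sigma (phi : nat -> nat -> mso Sigma) :
  (forall b1 b2 x y, x \in b1 -> y \in b1 -> closed_in b1 b2 (phi x y)) ->
  forall f b1 b2, closed_in b1 b2 f -> closed_in b1 b2 (subst phi f).
Proof.
move=> Hphi; elim=> [a x|x y|x y|x y|x X|g IH|g IHg h IHh|v g IH|v g IH] b1 b2 //=.
- by case/andP; apply: Hphi.
- exact: IH.
- by case/andP=> /IHg -> /IHh ->.
- exact: IH.
- exact: IH.
Qed.

Lemma subst_sat Sigma (T : utree Sigma) (R R' : node -> node -> Prop) phi N :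
  (forall e1 e2 x y, x < N -> y < N -> e1 x \in tdom T -> e1 y \in tdom T ->
     (sat T R' e1 e2 (phi x y) <-> R (e1 x) (e1 y))) ->
  forall f b1 b2 e1 e2, vbound f <= N -> closed_in b1 b2 f ->
  (forall v, v \in b1 -> e1 v \in tdom T) ->
  (sat T R' e1 e2 (subst phi f) <-> sat T R e1 e2 f).
Proof.
move=> Hphi; elim=> [a x|x y|x y|x y|x X|g IH|g IHg h IHh|v g IH|v g IH] b1 b2 e1 e2 /= Hb Hc He.
- by split.
- by split.
- move: Hb Hc; rewrite geq_max => /andP[Hx Hy] /andP[Hx' Hy'].
  by apply: Hphi => //; [apply: He | apply: He].
- by split.
- by split.
- have := IH b1 b2 e1 e2 Hb Hc He; tauto.
- move: Hb Hc; rewrite geq_max => /andP[Hg Hh] /andP[Hg' Hh'].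
  have := IHg b1 b2 e1 e2 Hg Hg' He; have := IHh b1 b2 e1 e2 Hh Hh' He; tauto.
- move: Hb; rewrite geq_max => /andP[_ Hg].
  have E : forall u, u \in tdom T ->
    (sat T R' (upd e1 v u) e2 (subst phi g) <-> sat T R (upd e1 v u) e2 g).
    move=> u Hu; apply: (IH (v :: b1) b2) => // w.
    by rewrite inE /upd; case: (w == v) => //= /He.
  by split; case=> u [Hu Hs]; exists u; split=> //; apply/(E u Hu).
- have E : forall U, (sat T R' e1 (upd e2 v U) (subst phi g) <-> sat T R e1 (upd e2 v U) g).
    by move=> U; apply: (IH b1 (v :: b2)).
  by split; case=> U [Hu Hs]; exists U; split=> //; apply/E.
Qed.

Lemma desc_irr (x : node) : ~ desc x x.
Proof.
case=> s [Hs E]; have := congr1 size E; rewrite size_cat.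
by case: s Hs {E} => // a s _ /=; lia.
Qed.

Lemma cat_cmp (a b u w : node) : a ++ u = b ++ w ->
  (exists t, b = a ++ t) \/ (exists t, a = b ++ t).
Proof.
elim: a b => [|c a IH] b; first by left; exists b.
case: b => [|d b]; first by right; exists (c :: a).
move=> /= [<- /IH] [] [t ->]; [left|right]; by exists t.
Qed.

Lemma split3 (x y : node) : (exists t, y = x ++ t) \/ (exists t, x = y ++ t) \/
  exists p i j u v, i <> j /\ x = rcons p i ++ u /\ y = rcons p j ++ v.
Proof.
elim: x y => [|c x IH] y; first by left; exists y.
case: y => [|d y]; first by right; left; exists (c :: x).
have [<-|Hcd] := eqVneq c d.
  case: (IH y) => [[t ->]|[[t ->]|[p [i [j [u [v [Hij [-> ->]]]]]]]]].
  - by left; exists t.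
  - by right; left; exists t.
  - by right; right; exists (c :: p), i, j, u, v.
by right; right; exists [::], c, d, x, y; split=> //; apply/eqP.
Qed.

Lemma rcons_cat_inj (p : node) i j u v : rcons p i ++ u = rcons p j ++ v -> i = j.
Proof. by rewrite !cat_rcons => /eqP; rewrite eqseq_cat // => /andP[_ /eqP [->]]. Qed.

Lemma pre_in Sigma (T : utree Sigma) (a u : node) : a ++ u \in tdom T -> a \in tdom T.
Proof. by case: (tdom_ok T) => _ [H _]; apply: H. Qed.

Definition branch (Rs : node -> node -> Prop) (x y : node) :=
  exists p i j u v, Rs (rcons p i) (rcons p j) /\ x = rcons p i ++ u /\ y = rcons p j ++ v.

Definition docR Sigma (T : utree Sigma) Rs x y :=
  x \in tdom T /\ y \in tdom T /\ (desc x y \/ branch Rs x y).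

Lemma docR_linear Sigma (T : utree Sigma) Rs :
  sibling_order_on T Rs -> linear_order_on T (docR T Rs).
Proof.
case=> Hdom [Hshape Hlin].
have Irr : forall p i, ~ Rs (rcons p i) (rcons p i).
  move=> p i H; have [Hd _] := Hdom _ _ H; have [Hi _] := Hlin p.
  by apply: (Hi (rcons p i)) => //; exists i.
have Tr : forall p i j k, Rs (rcons p i) (rcons p j) -> Rs (rcons p j) (rcons p k) ->
    Rs (rcons p i) (rcons p k).
  move=> p i j k H1 H2; have [Hi [Ht _]] := Hlin p.
  have [D1 D2] := Hdom _ _ H1; have [_ D3] := Hdom _ _ H2.
  by apply: (Ht _ (rcons p j)) => //; [exists i|exists j|exists k].
split; first by move=> x y [? [? _]].
split.
  move=> x [_ [_ [/desc_irr //|[p [i [j [u [v [H [E1 E2]]]]]]]]]].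
  by move: (E1); rewrite E2 => /rcons_cat_inj Eij; move: H; rewrite Eij; apply: Irr.
split.
  move=> x y z [Hx [_ Hxy]] [_ [Hz Hyz]]; do 2 split=> //.
  case: Hxy => [[s [Hs Ey]]|[p [i [j [u [v [H [Ex Ey]]]]]]]].
  - case: Hyz => [[s' [Hs' Ez]]|[q [j' [k [v' [w [H' [Ey' Ez]]]]]]]].
      left; exists (s ++ s'); split; last by rewrite Ez Ey catA.
      by case: s Hs {Ey} => // *.
    move: Ey'; rewrite Ey => /cat_cmp [[t Et]|[t Et]].
    + case/lastP: t Et => [|t c] Et.
        by rewrite cats0 in Et; right; exists q, j', k, [::], w; rewrite cats0 -Et.
      left; exists (t ++ k :: w); split; first by case: t {Et}.
      move: Et; rewrite -rcons_cat => /eqP; rewrite eqseq_rcons => /andP[/eqP Eq _].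
      by rewrite Ez Eq cat_rcons catA.
    + by right; exists q, j', k, t, w; rewrite Et.
  - case: Hyz => [[s' [Hs' Ez]]|[q [j' [k [v' [w [H' [Ey' Ez]]]]]]]].
      by right; exists p, i, j, u, (v ++ s'); rewrite Ez Ey catA.
    move: (Ey'); rewrite Ey => Eyy.
    case: (cat_cmp Eyy) => [[t Et]|[t Et]].
    + case/lastP: t Et => [|t c] Et.
        move: Et; rewrite cats0 => /eqP; rewrite eqseq_rcons => /andP[/eqP Eq /eqP Ec].
        subst q j'; right; exists p, i, k, u, w; split=> //; exact: Tr H H'.
      move: Et; rewrite -rcons_cat => /eqP; rewrite eqseq_rcons => /andP[/eqP Eq _].
      right; exists p, i, j, u, (t ++ k :: w); split=> //; split=> //.
      by rewrite Ez Eq cat_rcons catA.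
    + case/lastP: t Et => [|t c] Et.
        move: Et; rewrite cats0 => /eqP; rewrite eqseq_rcons => /andP[/eqP Eq /eqP Ec].
        subst q j'; right; exists p, i, k, u, w; split=> //; exact: Tr H H'.
      move: Et; rewrite -rcons_cat => /eqP; rewrite eqseq_rcons => /andP[/eqP Eq _].
      right; exists q, j', k, (t ++ i :: u), w; split=> //; split=> //.
      by rewrite Ex Eq cat_rcons catA.
move=> x y Hx Hy Hne.
case: (split3 x y) => [[t Et]|[[t Et]|[p [i [j [u [v [Hij [Ex Ey]]]]]]]]].
- left; do 2 split=> //; left; exists t; split=> //.
  by move=> Ht; apply: Hne; rewrite Et Ht cats0.
- right; do 2 split=> //; left; exists t; split=> //.
  by move=> Ht; apply: Hne; rewrite Et Ht cats0.
- have Di : rcons p i \in tdom T by apply: (@pre_in _ T _ u); rewrite -Ex.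
  have Dj : rcons p j \in tdom T by apply: (@pre_in _ T _ v); rewrite -Ey.
  have [_ [_ Htot]] := Hlin p.
  have Hne' : rcons p i <> rcons p j by move/eqP; rewrite eqseq_rcons eqxx /= => /eqP.
  case: (Htot _ _ (ex_intro _ i (conj erefl Di)) (ex_intro _ j (conj erefl Dj)) Hne') => H.
  + by left; do 2 split=> //; right; exists p, i, j, u, v.
  + by right; do 2 split=> //; right; exists p, j, i, v, u.
Qed.

Definition sibR (R : node -> node -> Prop) (x y : node) :=
  R x y /\ exists p i j, x = rcons p i /\ y = rcons p j.

Lemma sibR_sib Sigma (T : utree Sigma) R :
  linear_order_on T R -> sibling_order_on T (sibR R).
Proof.
case=> Hdom [Hirr [Htr Htot]].
split; first by move=> x y [/Hdom].
split.
  move=> x y [Hxy [p [i [j [Ex Ey]]]]]; exists p, i, j; split; last by [].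
  by move=> Eij; apply: (Hirr x); rewrite {2}Ex Eij -Ey.
move=> s /=; split; first by move=> x _ [/Hirr].
split.
  move=> x y z [i [Ex _]] _ [k [Ez _]] [H1 _] [H2 _]; split; first exact: Htr H2.
  by exists s, i, k.
move=> x y [i [Ex Dx]] [j [Ey Dy]] Hne.
by case: (Htot _ _ Dx Dy Hne) => H; [left|right]; split=> //; [exists s, i, j|exists s, j, i].
Qed.

Lemma lin_exists Sigma (T : utree Sigma) : exists R, linear_order_on T R.
Proof.
exists (fun x y => x \in tdom T /\ y \in tdom T /\ index x (tdom T) < index y (tdom T)).
split; first by move=> x y [? [? _]].
split; first by move=> x [_ [_]]; rewrite ltnn.
split; first by move=> x y z [? [? H1]] [? [? H2]]; do 2 split=> //; exact: ltn_trans H2.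
move=> x y Hx Hy Hne.
case: (ltngtP (index x (tdom T)) (index y (tdom T))) => H.
- by left.
- by right.
- by exfalso; apply: Hne; rewrite -(nth_index [::] Hx) H nth_index.
Qed.

Lemma parent_sem Sigma (T : utree Sigma) (z x : node) : x \in tdom T ->
  (z \in tdom T /\ desc z x /\ ~ (exists w, w \in tdom T /\ desc z w /\ desc w x))
  <-> exists i, x = rcons z i.
Proof.
move=> Hx; split.
  case=> Hz [[s [Hs Ex]] Hn]; case: s Hs Ex => // c s _ Ex.
  case: s Ex => [|d s] Ex; first by exists c; rewrite cats1 in Ex.
  exfalso; apply: Hn; exists (rcons z c); split.
    by apply: (@pre_in _ T _ (d :: s)); rewrite cat_rcons -Ex.
  by split; [exists [:: c]; rewrite cats1 | exists (d :: s); rewrite cat_rcons].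
case=> i Ex; split; first by apply: (@pre_in _ T _ [:: i]); rewrite cats1 -Ex.
split; first by exists [:: i]; rewrite cats1.
case=> w [_ [[s1 [H1 E1]] [s2 [H2 E2]]]].
have := congr1 size Ex; rewrite E2 E1 !size_cat size_rcons.
by case: s1 H1 {E1 E2} => // ? ? _; case: s2 H2 => // ? ? _ /=; lia.
Qed.

Definition FAnd Sigma (a b : mso Sigma) := FNot (FOr (FNot a) (FNot b)).
Arguments FAnd : simpl never.

Lemma sat_and Sigma (T : utree Sigma) R e1 e2 (a b : mso Sigma) :
  sat T R e1 e2 (FAnd a b) <-> sat T R e1 e2 a /\ sat T R e1 e2 b.
Proof.
rewrite /=; split; last tauto.
by move=> H; split; apply: NNPP => H'; apply: H; tauto.
Qed.

Definition phiDoc Sigma (N x y : nat) : mso Sigma :=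
  FOr (FDesc Sigma x y) (FEx1 N (FEx1 N.+1
    (FAnd (FAnd (FOr (FEq Sigma N x) (FDesc Sigma N x)) (FOr (FEq Sigma N.+1 y) (FDesc Sigma N.+1 y)))
          (FRel Sigma N N.+1)))).

Lemma phiDoc_sem Sigma (T : utree Sigma) R e1 e2 N x y : x < N -> y < N ->
  sat T R e1 e2 (phiDoc Sigma N x y) <->
  desc (e1 x) (e1 y) \/ exists a b, a \in tdom T /\ b \in tdom T /\
    (a = e1 x \/ desc a (e1 x)) /\ (b = e1 y \/ desc b (e1 y)) /\ R a b.
Proof.
move=> Hx Hy.
have Hx1 : (x == N) = false by apply: ltn_eqF.
have Hx2 : (x == N.+1) = false by apply: ltn_eqF; lia.
have Hy1 : (y == N) = false by apply: ltn_eqF.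
have Hy2 : (y == N.+1) = false by apply: ltn_eqF; lia.
have HN : (N == N.+1) = false by apply: ltn_eqF.
rewrite /phiDoc /= /upd HN Hx1 Hx2 Hy1 Hy2 !eqxx.
split; case=> [H|H]; try by left.
- right; case: H => a [Ha [b [Hb H]]]; exists a, b; split=> //; split=> //.
  have := classic (a = e1 x); have := classic (desc a (e1 x)).
  have := classic (b = e1 y); have := classic (desc b (e1 y)); have := classic (R a b).
  tauto.
- right; case: H => a [b [Ha [Hb H]]]; exists a; split=> //; exists b; split=> //.
  tauto.
Qed.

Definition Par Sigma (z w x : nat) : mso Sigma :=
  FAnd (FDesc Sigma z x) (FNot (FEx1 w (FAnd (FDesc Sigma z w) (FDesc Sigma w x)))).

Definition phiSib Sigma (N x y : nat) : mso Sigma :=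
  FAnd (FRel Sigma x y) (FEx1 N (FAnd (Par Sigma N N.+1 x) (Par Sigma N N.+1 y))).

Lemma phiSib_sem Sigma (T : utree Sigma) R e1 e2 N x y : x < N -> y < N ->
  sat T R e1 e2 (phiSib Sigma N x y) <->
  R (e1 x) (e1 y) /\ exists z, z \in tdom T /\
    (desc z (e1 x) /\ ~ (exists w, w \in tdom T /\ desc z w /\ desc w (e1 x))) /\
    (desc z (e1 y) /\ ~ (exists w, w \in tdom T /\ desc z w /\ desc w (e1 y))).
Proof.
move=> Hx Hy.
have Hx1 : (x == N) = false by apply: ltn_eqF.
have Hx2 : (x == N.+1) = false by apply: ltn_eqF; lia.
have Hy1 : (y == N) = false by apply: ltn_eqF.
have Hy2 : (y == N.+1) = false by apply: ltn_eqF; lia.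
have HN : (N == N.+1) = false by apply: ltn_eqF.
have I : forall z v, (exists u0, u0 \in tdom T /\ ~ (~ desc z u0 \/ ~ desc u0 v)) <->
    exists w, w \in tdom T /\ desc z w /\ desc w v.
  move=> z v; split; case=> w [Hw H]; exists w; split=> //; last tauto.
  by have := classic (desc z w); have := classic (desc w v); tauto.
rewrite /phiSib /Par /= /upd HN Hx1 Hx2 Hy1 Hy2 !eqxx.
split.
- move=> H; have HR : R (e1 x) (e1 y) by apply: NNPP => HR; apply: H; left.
  split=> //.
  apply: NNPP => H'; apply: H; right => -[z [Hz Hzz]]; apply: H'; exists z; split=> //.
  move: Hzz; rewrite !I.
  have := classic (desc z (e1 x)); have := classic (desc z (e1 y)).
  have := classic (exists w, w \in tdom T /\ desc z w /\ desc w (e1 x)).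
  have := classic (exists w, w \in tdom T /\ desc z w /\ desc w (e1 y)).
  tauto.
- case=> HR [z [Hz Hzz]] [HnR|Hn]; first by apply: HnR.
  apply: Hn; exists z; split=> //; rewrite !I; tauto.
Qed.

Lemma branch_iff Sigma (T : utree Sigma) Rs x y : sibling_order_on T Rs ->
  (exists a b, a \in tdom T /\ b \in tdom T /\
    (a = x \/ desc a x) /\ (b = y \/ desc b y) /\ Rs a b) <-> branch Rs x y.
Proof.
case=> Hdom [Hshape _]; split.
  case=> a [b [_ [_ [Ha [Hb H]]]]].
  have [p [i [j [_ [Ea Eb]]]]] := Hshape _ _ H.
  have [u Eu] : exists u, x = a ++ u.
    by case: Ha => [->|[s [_ ->]]]; [exists [::]; rewrite cats0 | exists s].
  have [v Ev] : exists v, y = b ++ v.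
    by case: Hb => [->|[s [_ ->]]]; [exists [::]; rewrite cats0 | exists s].
  by exists p, i, j, u, v; rewrite -Ea -Eb.
case=> p [i [j [u [v [H [Ex Ey]]]]]].
have [Da Db] := Hdom _ _ H.
exists (rcons p i), (rcons p j); do 2 split=> //; split; last split=> //.
  by case: u Ex => [|c u] ->; [left; rewrite cats0 | right; exists (c :: u)].
by case: v Ey => [|c v] ->; [left; rewrite cats0 | right; exists (c :: v)].
Qed.

Lemma doc_hyp Sigma (T : utree Sigma) Rs N : sibling_order_on T Rs ->
  forall e1 e2 x y, x < N -> y < N -> e1 x \in tdom T -> e1 y \in tdom T ->
  (sat T Rs e1 e2 (phiDoc Sigma N x y) <-> docR T Rs (e1 x) (e1 y)).
Proof.
move=> Hs e1 e2 x y Hx Hy Dx Dy; rewrite phiDoc_sem // /docR (branch_iff _ _ Hs).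
tauto.
Qed.

Lemma sib_hyp Sigma (T : utree Sigma) R N :
  forall e1 e2 x y, x < N -> y < N -> e1 x \in tdom T -> e1 y \in tdom T ->
  (sat T R e1 e2 (phiSib Sigma N x y) <-> sibR R (e1 x) (e1 y)).
Proof.
move=> e1 e2 x y Hx Hy Dx Dy; rewrite phiSib_sem // /sibR.
split; case=> HR H; split=> //.
  case: H => z [Hz [H1 H2]].
  have [i Ei] := (parent_sem z Dx).1 (conj Hz H1).
  have [j Ej] := (parent_sem z Dy).1 (conj Hz H2).
  by exists z, i, j.
case: H => p [i [j [Ex Ey]]].
have [Hz H1] := (parent_sem p Dx).2 (ex_intro _ i Ex).
have [_ H2] := (parent_sem p Dy).2 (ex_intro _ j Ey).
by exists p.
Qed.

Lemma doc_closed Sigma N : forall b1 b2 x y, x \in b1 -> y \in b1 ->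
  closed_in b1 b2 (phiDoc Sigma N x y).
Proof. by move=> b1 b2 x y Hx Hy; rewrite /= !inE Hx Hy !eqxx !orbT. Qed.

Lemma sib_closed Sigma N : forall b1 b2 x y, x \in b1 -> y \in b1 ->
  closed_in b1 b2 (phiSib Sigma N x y).
Proof. by move=> b1 b2 x y Hx Hy; rewrite /= !inE Hx Hy !eqxx !orbT. Qed.

Theorem lemma4p2 (Sigma : finType) (S : utree Sigma -> Prop) :
  order_inv_definable S <-> sibling_inv_definable S.
Proof.
split.
- case=> f [Hs [Hinv HS]].
  pose N := vbound f.
  have K : forall T Rs, sibling_order_on T Rs ->
      (models T Rs (subst (phiDoc Sigma N) f) <-> models T (docR T Rs) f).
    move=> T Rs HRs; rewrite /models; apply: (@subst_sat _ _ _ _ _ _ (@doc_hyp Sigma T Rs N HRs) f [::] [::]) => //.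
  exists (subst (phiDoc Sigma N) f); split; first exact: subst_closed (@doc_closed Sigma N) _ _ _ Hs.
  split.
    move=> T R1 R2 H1 H2; rewrite (K _ _ H1) (K _ _ H2).
    exact: Hinv (docR_linear H1) (docR_linear H2).
  move=> T; rewrite HS; split.
    case=> R [HR Hm]; have [L HL] := lin_exists T.
    have Hsib := sibR_sib HL.
    exists (sibR L); split=> //; rewrite (K _ _ Hsib).
    by apply/(Hinv _ _ _ (docR_linear Hsib) HR).
  case=> Rs [HRs Hm]; exists (docR T Rs); split; first exact: docR_linear.
  by apply/K.
- case=> f [Hs [Hinv HS]].
  pose N := vbound f.
  have K : forall T R,
      (models T R (subst (phiSib Sigma N) f) <-> models T (sibR R) f).
    move=> T R; rewrite /models; apply: (@subst_sat _ _ _ _ _ _ (@sib_hyp Sigma T R N) f [::] [::]) => //.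
  exists (subst (phiSib Sigma N) f); split; first exact: subst_closed (@sib_closed Sigma N) _ _ _ Hs.
  split.
    move=> T R1 R2 H1 H2; rewrite (K T R1) (K T R2).
    exact: Hinv (sibR_sib H1) (sibR_sib H2).
  move=> T; rewrite HS; split.
    case=> R [HR Hm]; have [L HL] := lin_exists T.
    exists L; split=> //; rewrite K.
    by apply/(Hinv _ _ _ (sibR_sib HL) HR).
  case=> R [HR Hm]; exists (sibR R); split; first exact: sibR_sib.
  by apply/K.
Qed.
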